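(* Let $m\ge 2$ be an integer, let $x_0,\dots,x_N\in[0,1]$ be distinct nodes, and let $$G(x)=\frac{\operatorname{sign}x}{2}\left(\frac{e^x-e^{-x}}{2}-\sum_{k=1}^{m-1}\frac{x^{2k-1}}{(2k-1)!}\right).$$ Let $S$ be the $m\times(N+1)$ matrix whose rows are $(x_0^{\alpha},\dots,x_N^{\alpha})$ for $\alpha=0,1,\dots,m-2$ and, as last row, $(e^{-x_0},\dots,e^{-x_N})$. Define $$\Phi(\overline{\mathbf C})=2(-1)^m\sum_{\beta=0}^N\sum_{\gamma=0}^N G(x_\beta-x_\gamma)\,\overline C_\beta\overline C_\gamma,\qquad \overline{\mathbf C}=(\overline C_0,\dots,\overline C_N)\in\mathbb R^{N+1}.$$ Then for every nonzero vector $\overline{\mathbf C}\in\mathbb R^{N+1}$ with $S\overline{\mathbf C}=0$, one has $\Phi(\overline{\mathbf C})>0$.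
   Context: Here $\Phi$ is (up to the factor in the Lagrange function) the quadratic form arising from the squared norm of the error functional of a quadrature formula $\int_0^1\varphi\,dx\cong\sum_\beta C_\beta\varphi(x_\beta)$ in the space $W_2^{(m,m-1)}(0,1)$ with norm $\left(\int_0^1(\varphi^{(m)}+\varphi^{(m-1)})^2dx\right)^{1/2}$; the condition $S\overline{\mathbf C}=0$ means $\sum_\gamma\overline C_\gamma x_\gamma^\alpha=0$ for $\alpha=0,\dots,m-2$ and $\sum_\gamma\overline C_\gamma e^{-x_\gamma}=0$. *)

(* Defs.v *)
From Stdlib Require Import Reals Lra Lia Factorial.
Open Scope R_scope.

Definition sgn (x : R) : R :=
  if Rlt_dec 0 x then 1 else if Rlt_dec x 0 then -1 else 0.

Definition Gfun (m : nat) (x : R) : R :=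
  sgn x / 2 *
  ((exp x - exp (- x)) / 2
   - sum_f 1 (m - 1) (fun k => x ^ (2 * k - 1) / INR (fact (2 * k - 1)))).

Definition Phi (m N : nat) (x C : nat -> R) : R :=
  2 * (-1) ^ m *
  sum_f_R0 (fun b => sum_f_R0 (fun g => Gfun m (x b - x g) * C b * C g) N) N.

Definition S_kernel (m N : nat) (x C : nat -> R) : Prop :=
  (forall alpha : nat, (alpha <= m - 2)%nat ->
     sum_f_R0 (fun g => C g * x g ^ alpha) N = 0) /\
  sum_f_R0 (fun g => C g * exp (- x g)) N = 0.

(* Main.v *)
Require Import Defs.
From Stdlib Require Import Reals.
From Stdlib Require Import Reals Lra Lia Factorial Classical.
From Coquelicot Require Import Coquelicot.
Open Scope R_scope.
Notation isd f x l := (@is_derive R_AbsRing R_NormedModule f x l).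

Lemma d_plus f g x a b : isd f x a -> isd g x b -> isd (fun t => f t + g t) x (a + b).
Proof. intros H1 H2. exact (is_derive_plus f g x a b H1 H2). Qed.
Lemma d_minus f g x a b : isd f x a -> isd g x b -> isd (fun t => f t - g t) x (a - b).
Proof. intros H1 H2. exact (is_derive_minus f g x a b H1 H2). Qed.
Lemma d_mult f g x a b : isd f x a -> isd g x b -> isd (fun t => f t * g t) x (a * g x + f x * b).
Proof. intros H1 H2. exact (is_derive_mult f g x a b H1 H2 Rmult_comm). Qed.
Lemma d_scal k f x a : isd f x a -> isd (fun t => k * f t) x (k * a).
Proof. apply is_derive_scal. Qed.
Lemma d_const (c x : R) : isd (fun _ : R => c) x 0.
Proof. exact (@is_derive_const R_AbsRing R_NormedModule c x). Qed.
Lemma d_shift f x a c : isd f (x - c) a -> isd (fun t => f (t - c)) x a.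
Proof. intros H. assert (H2: isd (fun t => t - c) x 1).
  { replace 1 with (1 - 0) by ring. apply d_minus. exact (is_derive_id x). apply d_const. }
  pose proof (is_derive_comp f (fun t => t - c) x a 1 H H2) as H3.
  replace a with (scal 1 a). exact H3. unfold scal; simpl. unfold mult; simpl. ring.
Qed.

Lemma d_eq (f : R -> R) (x a b : R) : isd f x a -> @eq R a b -> isd f x b.
Proof. intros H ->; exact H. Qed.
Lemma d_ext (f g : R -> R) (x a : R) : (forall t, f t = g t) -> isd f x a -> isd g x a.
Proof. intros H1 H2. exact (is_derive_ext f g x a H1 H2). Qed.

Lemma ball_R (c : R) (e : posreal) t : ball c e t -> Rabs (t - c) < e.
Proof. intros H. exact H. Qed.

Lemma sgn_pos s : 0 < s -> sgn s = 1.
Proof. intros H. unfold sgn. destruct (Rlt_dec 0 s); [reflexivity | lra]. Qed.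
Lemma sgn_neg s : s < 0 -> sgn s = -1.
Proof. intros H. unfold sgn. destruct (Rlt_dec 0 s); [lra|]. destruct (Rlt_dec s 0); [reflexivity|lra]. Qed.
Lemma sgn_0 : sgn 0 = 0.
Proof. unfold sgn. destruct (Rlt_dec 0 0); [lra|]. destruct (Rlt_dec 0 0); [lra|reflexivity]. Qed.
Lemma sgn_abs s : Rabs (sgn s) <= 1.
Proof. unfold sgn. destruct (Rlt_dec 0 s); [|destruct (Rlt_dec s 0)]; 
  unfold Rabs; destruct Rcase_abs; lra. Qed.

Lemma loc_pos s : 0 < s -> locally s (fun t => sgn t = 1).
Proof. intros H. exists (mkposreal s H). intros t Ht. apply ball_R in Ht. simpl in Ht.
  apply sgn_pos. apply Rabs_def2 in Ht. destruct Ht. lra. Qed.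
Lemma loc_neg s : s < 0 -> locally s (fun t => sgn t = -1).
Proof. intros H. assert (H': 0 < -s) by lra. exists (mkposreal (-s) H'). intros t Ht. apply ball_R in Ht. simpl in Ht.
  apply sgn_neg. apply Rabs_def2 in Ht. destruct Ht. lra. Qed.
Lemma loc_lt s a : s < a -> locally s (fun t => t < a).
Proof. intros H. assert (H': 0 < a - s) by lra. exists (mkposreal (a - s) H'). intros t Ht. apply ball_R in Ht. simpl in Ht.
  apply Rabs_def2 in Ht. destruct Ht. lra. Qed.
Lemma loc_gt s a : a < s -> locally s (fun t => a < t).
Proof. intros H. assert (H': 0 < s - a) by lra. exists (mkposreal (s - a) H'). intros t Ht. apply ball_R in Ht. simpl in Ht.
  apply Rabs_def2 in Ht. destruct Ht. lra. Qed.

Lemma sgn_der0 (w : R -> R) : w 0 = 0 -> isd w 0 0 -> isd (fun t => sgn t / 2 * w t) 0 0.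
Proof.
  intros H0 Hd. apply is_derive_Reals in Hd. apply is_derive_Reals.
  intros eps Heps. destruct (Hd eps Heps) as [d Hd']. exists d. intros h Hh Hhd.
  specialize (Hd' h Hh Hhd). rewrite Rplus_0_l in *. rewrite H0 in *. rewrite sgn_0.
  replace ((sgn h / 2 * w h - 0 / 2 * 0) / h - 0) with ((sgn h / 2) * ((w h - 0) / h - 0)) by (field; auto).
  rewrite Rabs_mult. pose proof (sgn_abs h). 
  assert (Rabs (sgn h / 2) <= 1/2). { unfold Rdiv. rewrite Rabs_mult. rewrite (Rabs_pos_eq (/2)) by lra. lra. }
  pose proof (Rabs_pos ((w h - 0) / h - 0)). pose proof (Rabs_pos (sgn h / 2)). nra.
Qed.

Lemma piece_der0 (u : R -> R) a : u a = 0 -> isd u a 0 ->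
  isd (fun t => if Rlt_dec t a then u t else 0) a 0.
Proof.
  intros H0 Hd. apply is_derive_Reals in Hd. apply is_derive_Reals.
  intros eps Heps. destruct (Hd eps Heps) as [d Hd']. exists d. intros h Hh Hhd.
  specialize (Hd' h Hh Hhd). rewrite H0 in Hd'.
  destruct (Rlt_dec a a); [lra|].
  destruct (Rlt_dec (a + h) a).
  - exact Hd'.
  - replace ((0 - 0) / h - 0) with 0 by (field; auto). rewrite Rabs_R0. exact Heps.
Qed.

Fixpoint Rp (p : nat) (s : R) : R :=
  match p with O => exp s | S q => Rp q s - s ^ q / INR (fact q) end.

Lemma mono_der p s : isd (fun t => t ^ S p / INR (fact (S p))) s (s ^ p / INR (fact p)).
Proof.
  pose proof (is_derive_pow (fun t => t) (S p) s 1 (is_derive_id s)) as H.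
  pose proof (d_scal (/ INR (fact (S p))) _ _ _ H) as H2.
  replace (s ^ p / INR (fact p)) with (/ INR (fact (S p)) * (INR (S p) * 1 * s ^ Init.Nat.pred (S p))).
  eapply is_derive_ext; [|exact H2]. intros t; simpl; unfold Rdiv; ring.
  simpl pred. rewrite fact_simpl, mult_INR. field. split. apply INR_fact_neq_0. apply not_0_INR. lia.
Qed.

Lemma Rp_der p s : isd (Rp (S p)) s (Rp p s).
Proof.
  induction p.
  - simpl. eapply d_eq. apply (d_minus exp (fun t => t ^ 0 / INR (fact 0))). apply is_derive_exp.
    apply (d_const (1/1)). ring.
  - change (isd (fun t => Rp (S p) t - t ^ (S p) / INR (fact (S p))) s (Rp (S p) s)).
    simpl Rp at 2. apply d_minus. exact IHp. apply mono_der.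
Qed.

Lemma Rp0 p : Rp (S p) 0 = 0.
Proof. induction p.
  - simpl. rewrite exp_0. field.
  - change (Rp (S p) 0 - 0 ^ (S p) / INR (fact (S p)) = 0). rewrite IHp. rewrite pow_i by lia. unfold Rdiv. ring. Qed.

Lemma d_neg (f : R -> R) (x a : R) : isd f (-x) a -> isd (fun t => f (-t)) x (-a).
Proof. intros H. assert (H2: isd (fun t => -t) x (-1)).
  { eapply d_eq. apply (is_derive_opp (fun t : R => t) x 1 (is_derive_id x)). reflexivity. }
  pose proof (is_derive_comp f (fun t => -t) x a (-1) H H2) as H3.
  eapply d_eq. exact H3. simpl. unfold scal; simpl. unfold mult; simpl. ring.
Qed.

Definition V (p : nat) (e s : R) : R := / 2 * (Rp p s - e * Rp p (-s)).

Lemma V_der p e s : isd (V (S p) e) s (V p (-e) s).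
Proof. unfold V. eapply d_eq.
  apply (d_scal (/2) (fun t => Rp (S p) t - e * Rp (S p) (-t))).
  apply (d_minus (Rp (S p)) (fun t => e * Rp (S p) (-t))). apply Rp_der. apply d_scal. apply (d_neg (Rp (S p))). apply Rp_der.
  ring.
Qed.

Lemma Rp_neg p s : s < 0 -> 0 < (-1) ^ p * Rp p s.
Proof.
  revert s. induction p; intros s Hs.
  - simpl. rewrite Rmult_1_l. apply exp_pos.
  - destruct (MVT_cor2 (Rp (S p)) (Rp p) s 0 Hs) as [c [Hc1 Hc2]].
    { intros c _. apply is_derive_Reals. apply Rp_der. }
    rewrite Rp0 in Hc1. specialize (IHp c ltac:(lra)).
    replace (Rp (S p) s) with (- (Rp p c * (0 - s))) by lra.
    simpl. replace (-1 * (-1) ^ p * - (Rp p c * (0 - s))) with (((-1)^p * Rp p c) * (- s)) by ring.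
    apply Rmult_lt_0_compat; lra.
Qed.

Lemma pow_neg_even s j : (-s) ^ (2 * j) = s ^ (2 * j).
Proof. rewrite !pow_mult. replace ((-s)^2) with (s^2) by ring. reflexivity. Qed.
Lemma pow_neg_odd s j : (-s) ^ (S (2 * j)) = - s ^ (S (2 * j)).
Proof. change ((-s)^(S (2*j))) with (-s * (-s)^(2*j)); change (s^(S (2*j))) with (s * s^(2*j)); rewrite pow_neg_even; ring. Qed.

Lemma V_odd k s : V (2 * S k) 1 s =
  (exp s - exp (-s)) / 2 - sum_f_R0 (fun i => s ^ (2 * i + 1) / INR (fact (2 * i + 1))) k.
Proof.
  induction k.
  - unfold V. simpl. field.
  - replace (2 * S (S k))%nat with (S (S (2 * S k))) by lia.
    rewrite tech5. 
    match goal with |- _ = ?E - (?S + ?T) => replace (E - (S + T)) with ((E - S) - T) by ring end.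
    rewrite <- IHk. unfold V. 
    change (Rp (S (S (2 * S k))) s) with (Rp (2 * S k) s - s ^ (2 * S k) / INR (fact (2 * S k)) - s ^ (S (2 * S k)) / INR (fact (S (2 * S k)))).
    change (Rp (S (S (2 * S k))) (-s)) with (Rp (2 * S k) (-s) - (-s) ^ (2 * S k) / INR (fact (2 * S k)) - (-s) ^ (S (2 * S k)) / INR (fact (S (2 * S k)))).
    rewrite pow_neg_even, pow_neg_odd.
    replace (2 * S k + 1)%nat with (S (2 * S k)) by lia. field.
    split; apply INR_fact_neq_0.
Qed.

Lemma G_V m s : (2 <= m)%nat -> Gfun m s = sgn s / 2 * V (2 * (m - 1)) 1 s.
Proof.
  intros Hm. unfold Gfun. destruct m as [|[|k]]; [lia|lia|].
  replace (S (S k) - 1)%nat with (S k) by lia. rewrite V_odd. f_equal. f_equal.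
  unfold sum_f. replace (S k - 1)%nat with k by lia. apply sum_eq. intros i _.
  replace (2 * (i + 1) - 1)%nat with (2 * i + 1)%nat by lia. reflexivity.
Qed.

Lemma sum_scal_l a f N : sum_f_R0 (fun i => a * f i) N = a * sum_f_R0 f N.
Proof. induction N; simpl; [|rewrite IHN]; ring. Qed.
Lemma sum_sub f g N : sum_f_R0 (fun i => f i - g i) N = sum_f_R0 f N - sum_f_R0 g N.
Proof. induction N; simpl; [|rewrite IHN]; ring. Qed.
Lemma sum_add f g N : sum_f_R0 (fun i => f i + g i) N = sum_f_R0 f N + sum_f_R0 g N.
Proof. induction N; simpl; [|rewrite IHN]; ring. Qed.
Lemma sum_zero f N : (forall i, (i <= N)%nat -> f i = 0) -> sum_f_R0 f N = 0.
Proof. intros H. induction N; simpl. apply H; lia. rewrite IHN. rewrite H by lia. ring. intros; apply H; lia. Qed.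
Lemma sum_single f N b : (b <= N)%nat -> (forall i, (i <= N)%nat -> i <> b -> f i = 0) -> sum_f_R0 f N = f b.
Proof.
  intros Hb H. induction N.
  - assert (b = 0)%nat by lia. subst. reflexivity.
  - simpl. destruct (Nat.eq_dec b (S N)).
    + subst. rewrite sum_zero. ring. intros i Hi. apply H; lia.
    + rewrite IHN; [| lia | intros; apply H; lia]. rewrite (H (S N)) by lia. ring.
Qed.
Lemma sum_der (f : nat -> R -> R) (df : nat -> R) N t :
  (forall g, (g <= N)%nat -> isd (f g) t (df g)) ->
  isd (fun s => sum_f_R0 (fun g => f g s) N) t (sum_f_R0 df N).
Proof.
  intros H. induction N.
  - simpl. apply H; lia.
  - simpl. apply (d_plus (fun s => sum_f_R0 (fun g => f g s) N) (f (S N))).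
    apply IHN. intros; apply H; lia. apply H; lia.
Qed.

Lemma neg1_even n : (-1) ^ (2 * n) = 1.
Proof. rewrite pow_mult. replace ((-1)^2) with 1 by ring. apply pow1. Qed.

Section Main.
Variables (m N : nat) (x C : nat -> R).
Hypothesis Hm : (2 <= m)%nat.
Hypothesis Hmom : forall alpha : nat, (alpha <= m - 2)%nat -> sum_f_R0 (fun g => C g * x g ^ alpha) N = 0.
Hypothesis Hexp : sum_f_R0 (fun g => C g * exp (- x g)) N = 0.

Let n := (m - 1)%nat.

Definition Ds (j : nat) (s : R) : R := sgn s / 2 * V (2 * n - j) ((-1) ^ j) s.

Lemma Ds_der j s : (j < 2 * n)%nat -> isd (Ds j) s (Ds (S j) s).
Proof.
  intros Hj. unfold Ds.
  remember (2 * n - S j)%nat as p eqn:Hp.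
  replace (2 * n - j)%nat with (S p) by lia.
  set (e := (-1) ^ j).
  replace ((-1) ^ S j) with (- e) by (unfold e; simpl; ring).
  destruct (Rtotal_order s 0) as [Hs|[Hs|Hs]].
  - apply (is_derive_ext_loc (fun t => -1 / 2 * V (S p) e t)).
    apply (filter_imp (fun t => sgn t = -1)). intros t Ht; rewrite Ht; reflexivity. apply loc_neg; exact Hs.
    rewrite (sgn_neg s Hs). apply d_scal. apply V_der.
  - subst s. rewrite sgn_0. eapply d_eq. apply sgn_der0.
    + unfold V. rewrite Ropp_0, Rp0. ring.
    + eapply d_eq. apply V_der. destruct p as [|q].
      * assert (S j = 2 * n)%nat by lia.
        assert (He : e = -1). { unfold e. pose proof (neg1_even n) as Hn. rewrite <- H in Hn. simpl in Hn. lra. }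
        unfold V. simpl. rewrite Ropp_0, exp_0, He. ring.
      * unfold V. rewrite Ropp_0, Rp0. ring.
    + unfold Rdiv. rewrite !Rmult_0_l. reflexivity.
  - apply (is_derive_ext_loc (fun t => 1 / 2 * V (S p) e t)).
    apply (filter_imp (fun t => sgn t = 1)). intros t Ht; rewrite Ht; reflexivity. apply loc_pos; exact Hs.
    rewrite (sgn_pos s Hs). apply d_scal. apply V_der.
Qed.


Definition F (j : nat) (t : R) : R := sum_f_R0 (fun g => C g * Ds j (t - x g)) N.

Lemma F_der j t : (j < 2 * n)%nat -> isd (F j) t (F (S j) t).
Proof.
  intros Hj. unfold F. apply (sum_der (fun g s => C g * Ds j (s - x g))).
  intros g _. apply d_scal. apply (d_shift (Ds j)). apply Ds_der. exact Hj.
Qed.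

Lemma poly_kill k : forall j a, (j + k <= m - 2)%nat ->
  sum_f_R0 (fun g => C g * (x g ^ j * (a - x g) ^ k)) N = 0.
Proof.
  induction k; intros j a Hjk.
  - rewrite <- (Hmom j) by lia. apply sum_eq. intros i _. simpl. ring.
  - transitivity (a * sum_f_R0 (fun g => C g * (x g ^ j * (a - x g) ^ k)) N
                  - sum_f_R0 (fun g => C g * (x g ^ (S j) * (a - x g) ^ k)) N).
    + rewrite <- sum_scal_l, <- sum_sub. apply sum_eq. intros i _. simpl. ring.
    + rewrite !IHk by lia. ring.
Qed.

Lemma KillR p a : (p <= n)%nat -> sum_f_R0 (fun g => C g * Rp p (a - x g)) N = 0.
Proof.
  induction p; intros Hp.
  - simpl. transitivity (exp a * sum_f_R0 (fun g => C g * exp (- x g)) N).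
    + rewrite <- sum_scal_l. apply sum_eq. intros i _. unfold Rminus. rewrite exp_plus. ring.
    + rewrite Hexp. ring.
  - simpl. transitivity (sum_f_R0 (fun g => C g * Rp p (a - x g)) N
       - / INR (fact p) * sum_f_R0 (fun g => C g * (x g ^ 0 * (a - x g) ^ p)) N).
    + rewrite <- sum_scal_l, <- sum_sub. apply sum_eq. intros i _. simpl. unfold Rdiv. ring.
    + rewrite IHp by lia. rewrite poly_kill. ring. unfold n in Hp. lia.
Qed.

Lemma Ds_sum s : Ds (S n) s + Ds n s = sgn s / 2 * Rp n s.
Proof.
  unfold Ds. destruct n as [|k] eqn:En. unfold n in En; lia.
  replace (2 * S k - S (S k))%nat with k by lia.
  replace (2 * S k - S k)%nat with (S k) by lia.
  unfold V. change (Rp (S k) s) with (Rp k s - s ^ k / INR (fact k)).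
  change (Rp (S k) (-s)) with (Rp k (-s) - (-s) ^ k / INR (fact k)).
  assert (Hk : (-s) ^ k = (-1) ^ k * s ^ k). { rewrite <- Rpow_mult_distr. f_equal. ring. }
  rewrite Hk. 
  assert (Hk2 : (-1) ^ k * (-1) ^ k = 1). { rewrite <- Rpow_mult_distr. replace (-1 * -1) with 1 by ring. apply pow1. }
  replace ((-1) ^ S (S k)) with ((-1)^k) by (simpl; ring).
  replace ((-1) ^ S k) with (- (-1)^k) by (simpl; ring).
  set (c := (-1) ^ k) in *.
  transitivity (sgn s / 2 * (Rp k s - s ^ k / INR (fact k)) + (- (sgn s / 2) * / 2 * (s ^ k / INR (fact k))) * (c * c - 1)).
  field. apply INR_fact_neq_0. rewrite Hk2. ring.
Qed.

Definition LF (t : R) : R := F (S n) t + F n t.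
Definition indk (g : nat) (t : R) : R := if Rlt_dec t (x g) then Rp n (t - x g) else 0.
Definition kfun (t : R) : R := sum_f_R0 (fun g => C g * indk g t) N.

Lemma n_pos : (1 <= n)%nat.
Proof. unfold n; lia. Qed.

Lemma Rpn0 : Rp n 0 = 0.
Proof. destruct n as [|k] eqn:E. pose proof n_pos; lia. apply Rp0. Qed.

Lemma LF_eq t : LF t = - kfun t.
Proof.
  unfold LF, F, kfun. rewrite <- sum_add.
  transitivity (sum_f_R0 (fun g => - (C g * indk g t)) N + / 2 * sum_f_R0 (fun g => C g * Rp n (t - x g)) N).
  - rewrite <- sum_scal_l, <- sum_add. apply sum_eq. intros g _.
    replace (C g * Ds (S n) (t - x g) + C g * Ds n (t - x g)) with (C g * (Ds (S n) (t - x g) + Ds n (t - x g))) by ring.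
    rewrite Ds_sum. unfold indk. destruct (Rtotal_order t (x g)) as [H|[H|H]].
    + destruct (Rlt_dec t (x g)); [|lra]. rewrite sgn_neg by lra. field.
    + subst t. destruct (Rlt_dec (x g) (x g)); [lra|]. rewrite Rminus_diag, Rpn0. field.
    + destruct (Rlt_dec t (x g)); [lra|]. rewrite sgn_pos by lra. field.
  - rewrite KillR by lia. 
    transitivity (- sum_f_R0 (fun g => C g * indk g t) N + 0). 2: ring.
    f_equal. rewrite <- (Rmult_1_l (sum_f_R0 (fun g : nat => C g * indk g t) N)).
    rewrite Ropp_mult_distr_l, <- sum_scal_l. apply sum_eq. intros; ring. ring.
Qed.

Fixpoint Aux (b : nat) (p : nat) (t : R) : R :=
  match p with
  | O => Rp 0 (t - x b) * F 0 t
  | S q => Rp (S q) (t - x b) * (F (S q) t + F q t) - Aux b q t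
  end.

Lemma Aux_der b p t : (p <= n)%nat -> isd (Aux b p) t (Rp p (t - x b) * (F (S p) t + F p t)).
Proof.
  induction p; intros Hp.
  - simpl Aux. eapply d_eq. apply (d_mult (fun s => Rp 0 (s - x b)) (F 0)).
    apply (d_shift (Rp 0)). apply is_derive_exp. apply F_der. pose proof n_pos; lia.
    simpl. ring.
  - simpl Aux. eapply d_eq.
    apply (d_minus (fun s => Rp (S p) (s - x b) * (F (S p) s + F p s)) (Aux b p)).
    apply (d_mult (fun s => Rp (S p) (s - x b)) (fun s => F (S p) s + F p s)).
    apply (d_shift (Rp (S p))). apply Rp_der.
    apply (d_plus (F (S p)) (F p)); apply F_der; lia.
    apply IHp; lia. ring.
Qed.

Lemma Aux_at b p : Aux b p (x b) = (-1) ^ p * F 0 (x b).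
Proof.
  induction p.
  - simpl. rewrite Rminus_diag, exp_0. ring.
  - change (Aux b (S p) (x b)) with (Rp (S p) (x b - x b) * (F (S p) (x b) + F p (x b)) - Aux b p (x b)).
    rewrite IHp, Rminus_diag, Rp0. simpl. ring.
Qed.

Lemma Aux_kill p : (p <= n)%nat -> sum_f_R0 (fun b => C b * Aux b p 0) N = 0.
Proof.
  induction p; intros Hp.
  - simpl Aux. transitivity (F 0 0 * sum_f_R0 (fun b => C b * Rp 0 (0 - x b)) N).
    + rewrite <- sum_scal_l. apply sum_eq. intros; simpl; ring.
    + rewrite KillR by lia. ring.
  - change (sum_f_R0 (fun b => C b * (Rp (S p) (0 - x b) * (F (S p) 0 + F p 0) - Aux b p 0)) N = 0). transitivity ((F (S p) 0 + F p 0) * sum_f_R0 (fun b => C b * Rp (S p) (0 - x b)) N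
        - sum_f_R0 (fun b => C b * Aux b p 0) N).
    + rewrite <- sum_scal_l, <- sum_sub. apply sum_eq. intros; ring.
    + rewrite KillR by lia. rewrite IHp by lia. ring.
Qed.

Definition P (b : nat) (t : R) : R := if Rlt_dec t (x b) then Aux b n (x b) - Aux b n t else 0.

Lemma P_der b t : isd (P b) t (- (indk b t * LF t)).
Proof.
  unfold P, indk, LF. destruct (Rtotal_order t (x b)) as [H|[H|H]].
  - destruct (Rlt_dec t (x b)); [|lra].
    apply (is_derive_ext_loc (fun s => Aux b n (x b) - Aux b n s)).
    apply (filter_imp (fun s => s < x b)). intros s Hs. destruct (Rlt_dec s (x b)); [reflexivity|lra].
    apply loc_lt; exact H.
    eapply d_eq. apply (d_minus (fun _ => Aux b n (x b)) (Aux b n)). apply d_const. apply Aux_der. lia. ring.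
  - subst t. destruct (Rlt_dec (x b) (x b)); [lra|]. eapply d_eq.
    apply (piece_der0 (fun s => Aux b n (x b) - Aux b n s)). ring.
    eapply d_eq. apply (d_minus (fun _ => Aux b n (x b)) (Aux b n)). apply d_const. apply Aux_der. lia.
    rewrite Rminus_diag, Rpn0. ring. ring.
  - destruct (Rlt_dec t (x b)); [lra|].
    apply (is_derive_ext_loc (fun _ => 0)).
    apply (filter_imp (fun s => x b < s)). intros s Hs. destruct (Rlt_dec s (x b)); [lra|reflexivity].
    apply loc_gt; exact H.
    eapply d_eq. apply d_const. ring.
Qed.

Definition Omega (t : R) : R := sum_f_R0 (fun b => C b * P b t) N.

Lemma Omega_der t : isd Omega t (kfun t ^ 2).
Proof.
  unfold Omega. eapply d_eq. apply (sum_der (fun b s => C b * P b s)).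
  intros g _. apply d_scal. apply P_der.
  rewrite LF_eq. transitivity (kfun t * sum_f_R0 (fun b => C b * indk b t) N).
  rewrite <- sum_scal_l. apply sum_eq. intros; ring. unfold kfun. ring.
Qed.

Lemma Omega0 : (forall b, (b <= N)%nat -> 0 <= x b) -> Omega 0 = (-1) ^ n * sum_f_R0 (fun b => C b * F 0 (x b)) N.
Proof.
  intros Hx. unfold Omega.
  transitivity (sum_f_R0 (fun b => C b * ((-1) ^ n * F 0 (x b) - Aux b n 0)) N).
  - apply sum_eq. intros b Hb. f_equal. unfold P. rewrite <- Aux_at.
    destruct (Rlt_dec 0 (x b)). reflexivity. assert (x b = 0) by (specialize (Hx b Hb); lra).
    rewrite H. ring.
  - transitivity ((-1) ^ n * sum_f_R0 (fun b => C b * F 0 (x b)) N - sum_f_R0 (fun b => C b * Aux b n 0) N).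
    + rewrite <- sum_scal_l, <- sum_sub. apply sum_eq. intros; ring.
    + rewrite Aux_kill by lia. ring.
Qed.

Lemma Omega1 : (forall b, (b <= N)%nat -> x b <= 1) -> Omega 1 = 0.
Proof.
  intros Hx. unfold Omega. apply sum_zero. intros b Hb. unfold P.
  destruct (Rlt_dec 1 (x b)). specialize (Hx b Hb); lra. ring.
Qed.

Lemma S_G : sum_f_R0 (fun b => C b * F 0 (x b)) N =
  sum_f_R0 (fun b => sum_f_R0 (fun g => Gfun m (x b - x g) * C b * C g) N) N.
Proof.
  apply sum_eq. intros b _. unfold F. rewrite <- sum_scal_l. apply sum_eq. intros g _.
  rewrite G_V by exact Hm. unfold Ds. replace (2 * n - 0)%nat with (2 * (m - 1))%nat by (unfold n; lia).
  simpl pow. ring.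
Qed.

End Main.

Lemma mono (f df : R -> R) : (forall t, isd f t (df t)) -> (forall t, 0 <= df t) ->
  forall a b, a <= b -> f a <= f b.
Proof.
  intros Hd Hpos a b Hab. destruct (Req_dec a b) as [->|Hne]. lra.
  destruct (MVT_gen f a b df) as [c [_ Hc]].
  - intros; apply Hd.
  - intros t _. apply derivable_continuous_pt. exists (df t). apply is_derive_Reals. apply Hd.
  - specialize (Hpos c). assert (0 <= df c * (b - a)) by (apply Rmult_le_pos; lra). lra.
Qed.

Lemma strict_step (f : R -> R) t0 d : isd f t0 d -> 0 < d -> forall d0, 0 < d0 ->
  exists h, 0 < h < d0 /\ f t0 < f (t0 + h).
Proof.
  intros Hd Hpos d0 Hd0. apply is_derive_Reals in Hd.
  destruct (Hd (d / 2) ltac:(lra)) as [del Hdel].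
  set (h := Rmin (del / 2) (d0 / 2)).
  assert (Hh : 0 < h). { unfold h. apply Rmin_glb_lt; pose proof (cond_pos del); lra. }
  assert (Hh2 : h <= del / 2) by apply Rmin_l.
  assert (Hh3 : h <= d0 / 2) by apply Rmin_r.
  exists h. split. lra.
  specialize (Hdel h ltac:(lra)). rewrite Rabs_pos_eq in Hdel by lra.
  specialize (Hdel ltac:(pose proof (cond_pos del); lra)).
  apply Rabs_def2 in Hdel. destruct Hdel as [_ Hdel].
  assert (0 < (f (t0 + h) - f t0) / h) by lra.
  assert (0 < f (t0 + h) - f t0).
  { replace (f (t0 + h) - f t0) with (((f (t0 + h) - f t0) / h) * h) by (field; lra).
    apply Rmult_lt_0_compat; lra. }
  lra.
Qed.

Lemma argmax (Pr : nat -> Prop) (Pdec : forall i, Pr i \/ ~ Pr i) (f : nat -> R) N :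
  (exists b, (b <= N)%nat /\ Pr b) ->
  exists bs, (bs <= N)%nat /\ Pr bs /\ forall g, (g <= N)%nat -> Pr g -> f g <= f bs.
Proof.
  induction N; intros [b [Hb Pb]].
  - exists 0%nat. assert (b = 0)%nat by lia. subst. split; [lia|split; auto].
    intros g Hg _. assert (g = 0)%nat by lia. subst; lra.
  - destruct (classic (exists b, (b <= N)%nat /\ Pr b)) as [Hex|Hnex].
    + destruct (IHN Hex) as [bs [Hbs [Pbs Hmax]]].
      destruct (Pdec (S N)) as [PS|nPS].
      * destruct (Rle_dec (f bs) (f (S N))).
        -- exists (S N). split; [lia|split; auto]. intros g Hg Pg.
           destruct (Nat.eq_dec g (S N)). subst; lra. specialize (Hmax g ltac:(lia) Pg). lra.
        -- exists bs. split; [lia|split; auto]. intros g Hg Pg.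
           destruct (Nat.eq_dec g (S N)). subst; lra. apply Hmax; auto; lia.
      * exists bs. split; [lia|split; auto]. intros g Hg Pg.
        destruct (Nat.eq_dec g (S N)). subst; contradiction. apply Hmax; auto; lia.
    + assert (b = S N). { destruct (Nat.eq_dec b (S N)); auto. exfalso; apply Hnex; exists b; split; auto; lia. }
      subst b. exists (S N). split; [lia|split; auto]. intros g Hg Pg.
      destruct (Nat.eq_dec g (S N)). subst; lra. exfalso; apply Hnex; exists g; split; auto; lia.
Qed.

Lemma below_bound (f : nat -> R) N c : exists L, L < c /\ forall g, (g <= N)%nat -> f g < c -> f g <= L.
Proof.
  induction N.
  - destruct (Rlt_dec (f 0%nat) c).
    + exists (f 0%nat). split; auto. intros g Hg _. assert (g = 0)%nat by lia. subst; lra.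
    + exists (c - 1). split. lra. intros g Hg Hc. assert (g = 0)%nat by lia. subst; lra.
  - destruct IHN as [L [HL HLg]]. destruct (Rlt_dec (f (S N)) c).
    + exists (Rmax L (f (S N))). split. apply Rmax_lub_lt; auto.
      intros g Hg Hc. destruct (Nat.eq_dec g (S N)). subst; apply Rmax_r.
      eapply Rle_trans. apply HLg; auto; lia. apply Rmax_l.
    + exists L. split; auto. intros g Hg Hc. destruct (Nat.eq_dec g (S N)). subst; lra. apply HLg; auto; lia.
Qed.

Theorem theorem3p1 (m N : nat) (x C : nat -> R) :
  (2 <= m)%nat ->
  (forall i, (i <= N)%nat -> 0 <= x i <= 1) ->
  (forall i j, (i <= N)%nat -> (j <= N)%nat -> i <> j -> x i <> x j) ->
  (exists b, (b <= N)%nat /\ C b <> 0) ->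
  S_kernel m N x C ->
  Phi m N x C > 0.
Proof.
  intros Hm Hrange Hdist Hex [Hmom Hexp].
  destruct (argmax (fun i => C i <> 0) (fun i => classic _) x N Hex) as [bs [Hbs [Cbs Hmax]]].
  assert (Hxs : 0 < x bs).
  { destruct (Rle_lt_dec (x bs) 0) as [Hle|]; auto. exfalso.
    pose proof (Hmom 0%nat ltac:(lia)) as H0. rewrite (sum_single _ N bs Hbs) in H0.
    - simpl in H0. apply Cbs; lra.
    - intros i Hi Hne. destruct (classic (C i = 0)) as [->|Ci]. ring. exfalso.
      pose proof (Hmax i Hi Ci). pose proof (Hrange i Hi). pose proof (Hrange bs Hbs).
      apply (Hdist i bs Hi Hbs Hne). lra. }
  destruct (below_bound x N (x bs)) as [L [HL HLg]].
  set (L' := Rmax L 0).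
  assert (HL' : L' < x bs) by (apply Rmax_lub_lt; lra).
  assert (HL0 : 0 <= L') by apply Rmax_r.
  assert (HLL : L <= L') by apply Rmax_l.
  set (t0 := (L' + x bs) / 2).
  assert (Ht0 : 0 < t0 < x bs) by (unfold t0; lra).
  assert (Hxb1 : x bs <= 1) by (apply (Hrange bs Hbs)).
  assert (Hk : kfun m N x C t0 = C bs * Rp (m - 1) (t0 - x bs)).
  { unfold kfun. rewrite (sum_single _ N bs Hbs).
    - unfold indk. destruct (Rlt_dec t0 (x bs)); [ring | lra].
    - intros i Hi Hne. unfold indk. destruct (Rlt_dec t0 (x i)); [|ring].
      destruct (classic (C i = 0)) as [->|Ci]; [ring|]. exfalso.
      pose proof (Hmax i Hi Ci).
      destruct (Rlt_dec (x i) (x bs)) as [Hlt|Hnlt].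
      + pose proof (HLg i Hi Hlt). unfold t0 in r. lra.
      + apply (Hdist i bs Hi Hbs Hne). lra. }
  assert (Hkpos : 0 < kfun m N x C t0 ^ 2).
  { rewrite Hk. pose proof (Rp_neg (m - 1) (t0 - x bs) ltac:(lra)) as Hr.
    assert (Rp (m - 1) (t0 - x bs) <> 0). { intros Hz. rewrite Hz in Hr. lra. }
    replace ((C bs * Rp (m - 1) (t0 - x bs)) ^ 2) with (Rsqr (C bs * Rp (m - 1) (t0 - x bs))) by (unfold Rsqr; ring).
    apply Rsqr_pos_lt. apply Rmult_integral_contrapositive_currified; auto. }
  pose proof (Omega_der m N x C Hm Hmom Hexp) as Hd.
  pose proof (mono _ _ Hd (fun t => pow2_ge_0 _)) as Hmono.
  destruct (strict_step _ t0 _ (Hd t0) Hkpos (1 - t0) ltac:(lra)) as [h [Hh Hlt]].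
  pose proof (Hmono 0 t0 ltac:(lra)) as H1.
  pose proof (Hmono (t0 + h) 1 ltac:(lra)) as H2.
  rewrite (Omega1 m N x C (fun b Hb => proj2 (Hrange b Hb))) in H2.
  rewrite (Omega0 m N x C Hm Hmom Hexp (fun b Hb => proj1 (Hrange b Hb))) in H1.
  rewrite S_G in H1 by exact Hm.
  unfold Phi.
  set (Ss := sum_f_R0 (fun b => sum_f_R0 (fun g => Gfun m (x b - x g) * C b * C g) N) N) in *.
  assert (Hpow : (-1) ^ m = - (-1) ^ (m - 1)).
  { replace m with (S (m - 1)) at 1 by lia. simpl. ring. }
  rewrite Hpow. lra.
Qed.
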